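(* Let $A$ be a cyclic Leibniz algebra generated by $a$, with notation as in the context. For $1\le j\le s$ and $1\le i\le n_j$ put $U_{j,i}=\{b\in A: p_j(L_a)^i(b)=0\}$. Then $A^2$ is abelian, $A^2=U_{1,n_1-1}\oplus U_{2,n_2}\oplus\cdots\oplus U_{s,n_s}$, and every $U_{j,i}$ with $(j,i)\neq(1,n_1)$ is a (two-sided) ideal of $A$.
   Context: A (left) Leibniz algebra is an algebra satisfying $x(yz)=(xy)z+y(xz)$ for all $x,y,z$; all algebras are finite-dimensional over a field $F$. $A$ is a cyclic Leibniz algebra generated by $a$: $A$ is generated as an algebra by the single element $a$, and with $a^1=a$, $a^{k+1}=aa^k$, the elements $a,a^2,\dots,a^n$ form a basis of $A$. Write $aa^n=\alpha_2a^2+\cdots+\alpha_na^n$. $L_a:A\to A$ is $b\mapsto ab$, with characteristic (and minimal) polynomial $p(x)=x^n-\alpha_nx^{n-1}-\cdots-\alpha_2x=p_1(x)^{n_1}\cdots p_s(x)^{n_s}$, the $p_j$ distinct monic irreducibles over $F$, $p_1(x)=x$. $A^2=AA$. *)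

(* Defs.v *)
From HB Require Import structures.
From mathcomp Require Import all_boot all_order all_algebra.
Set Implicit Arguments. Unset Strict Implicit. Unset Printing Implicit Defensive.
Import GRing.Theory.
Local Open Scope ring_scope.

Section LeibnizDefs.
Variables (F : fieldType) (A : vectType F) (mul : A -> A -> A).

Definition bilinear_mul : Prop :=
  (forall c x y z, mul (c *: x + y) z = c *: mul x z + mul y z) /\
  (forall c x y z, mul z (c *: x + y) = c *: mul z x + mul z y).

Definition leibniz : Prop :=
  forall x y z, mul x (mul y z) = mul (mul x y) z + mul y (mul x z).

(* a^1 = a, a^(k+1) = a a^k ;  apow a k = a^(k+1) *)
Fixpoint apow (a : A) (k : nat) : A :=
  if k is k'.+1 then mul a (apow a k') else a.

Definition cyclic_basis (a : A) (n : nat) : Prop :=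
  basis_of fullv (mkseq (apow a) n).

Definition Lmul (a : A) : 'End(A) := linfun (mul a).

Definition lfun_poly (q : {poly F}) (f : 'End(A)) : 'End(A) :=
  \sum_(i < size q) q`_i *: iter i (fun g => (f \o g)%VF) \1%VF.

Definition lfun_char_poly (f : 'End(A)) : {poly F} :=
  char_poly (passmx.mxof (vbasis fullv) (vbasis fullv) f).

Definition sqA : {vspace A} :=
  <<[seq mul x y | x <- vbasis (fullv : {vspace A}), y <- vbasis (fullv : {vspace A})]>>%VS.

Definition Usp (a : A) (P : nat -> {poly F}) (j i : nat) : {vspace A} :=
  lker (lfun_poly (P j ^+ i) (Lmul a)).

Definition is_ideal (U : {vspace A}) : Prop :=
  forall x y, x \in U -> mul x y \in U /\ mul y x \in U.

End LeibnizDefs.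

(* Main.v *)
Require Import Defs.
From HB Require Import structures.
From mathcomp Require Import all_boot all_order all_algebra.
Set Implicit Arguments. Unset Strict Implicit. Unset Printing Implicit Defensive.
Import GRing.Theory.
Local Open Scope ring_scope.

Section LP.
Variables (F : fieldType) (A : vectType F).
Implicit Types (f : 'End(A)) (p q : {poly F}).

Definition itf f i : 'End(A) := iter i (fun g => (f \o g)%VF) \1%VF.

Lemma itfS0 f i x : itf f i.+1 x = f (itf f i x).
Proof. by rewrite /itf /= comp_lfunE. Qed.

Lemma itfS f i x : itf f i.+1 x = itf f i (f x).
Proof.
elim: i x => [|i IH] x; first by rewrite itfS0 /itf /= !id_lfunE.
by rewrite itfS0 IH itfS0.
Qed.

Lemma lpE q f x : lfun_poly q f x = \sum_(i < size q) q`_i *: itf f i x.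
Proof. by rewrite /lfun_poly sum_lfunE; apply: eq_bigr => i _; rewrite scale_lfunE. Qed.

Lemma lp_wide q f x m : (size q <= m)%N ->
  lfun_poly q f x = \sum_(i < m) q`_i *: itf f i x.
Proof.
move=> hm; rewrite lpE (big_ord_widen m (fun i => q`_i *: itf f i x)) //.
rewrite big_mkcond; apply: eq_bigr => i _; case: ifP => // /negbT.
by rewrite -leqNgt => h; rewrite nth_default // scale0r.
Qed.

Lemma lp0 f x : lfun_poly 0 f x = 0.
Proof. by rewrite lpE size_poly0 big_ord0. Qed.

Lemma lpD p q f x : lfun_poly (p + q) f x = lfun_poly p f x + lfun_poly q f x.
Proof.
pose m := maxn (size p) (size q).
rewrite (@lp_wide _ _ _ m) ?size_polyD // (@lp_wide p _ _ m) ?leq_maxl //.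
rewrite (@lp_wide q _ _ m) ?leq_maxr // -big_split /=.
by apply: eq_bigr => i _; rewrite coefD scalerDl.
Qed.

Lemma lpZ c p f x : lfun_poly (c *: p) f x = c *: lfun_poly p f x.
Proof.
rewrite (@lp_wide _ _ _ (size p)) ?size_scale_leq // lpE scaler_sumr.
by apply: eq_bigr => i _; rewrite coefZ scalerA.
Qed.

Lemma lpC c f x : lfun_poly c%:P f x = c *: x.
Proof.
rewrite (@lp_wide _ _ _ 1) ?size_polyC_leq1 // big_ord1 coefC /=.
by rewrite /itf /= id_lfunE.
Qed.

Lemma lp1 f x : lfun_poly 1 f x = x.
Proof. by rewrite -polyC1 lpC scale1r. Qed.

Lemma lpMX p f x : lfun_poly (p * 'X) f x = lfun_poly p f (f x).
Proof.
rewrite (@lp_wide _ _ _ (size p).+1); last first.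
  by apply: leq_trans (size_polyMleq _ _) _; rewrite size_polyX addn2.
rewrite big_ord_recl coefMX eqxx scale0r add0r lpE.
by apply: eq_bigr => i _; rewrite coefMX /= itfS.
Qed.

Lemma lp_comm q f x : lfun_poly q f (f x) = f (lfun_poly q f x).
Proof.
rewrite !lpE linear_sum; apply: eq_bigr => i _.
by rewrite linearZ -itfS itfS0.
Qed.

Lemma lpM p q f x : lfun_poly (p * q) f x = lfun_poly p f (lfun_poly q f x).
Proof.
elim/poly_ind: p x => [|p c IH] x; first by rewrite mul0r !lp0.
rewrite mulrDl -mulrA (mulrC 'X) mulrA mul_polyC lpD lpMX lpZ IH lp_comm.
by rewrite lpD lpMX lpC.
Qed.

Lemma lp_lin q f x y c : lfun_poly q f (c *: x + y) = c *: lfun_poly q f x + lfun_poly q f y.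
Proof. by rewrite linearP. Qed.

Lemma ker_dvd f u v : u %| v ->
  (lker (lfun_poly u f) <= lker (lfun_poly v f))%VS.
Proof.
move=> /divpK <-; apply/subvP => x; rewrite !memv_ker => /eqP h.
by rewrite lpM h linear0.
Qed.

Lemma ker_coprime f u v : coprimep u v ->
  lker (lfun_poly (u * v) f) = (lker (lfun_poly u f) + lker (lfun_poly v f))%VS /\
  (lker (lfun_poly u f) :&: lker (lfun_poly v f) = 0)%VS.
Proof.
case/Bezout_eq1_coprimepP => -[r t] /= e.
have dec x : x = lfun_poly (r * u) f x + lfun_poly (t * v) f x.
  by rewrite -lpD e lp1.
split.
  apply/subv_anti/andP; split; last first.
    by rewrite subv_add ker_dvd ?dvdp_mulIl // ker_dvd ?dvdp_mulIr.
  apply/subvP => x; rewrite memv_ker => /eqP h.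
  rewrite [x]dec addrC; apply: memv_add; rewrite memv_ker -lpM.
    by rewrite mulrC -mulrA (mulrC v) lpM h linear0.
  by rewrite mulrC -mulrA lpM h linear0.
apply/eqP; rewrite -subv0; apply/subvP => x /memv_capP [].
rewrite !memv_ker memv0 => /eqP hu /eqP hv.
by rewrite [x]dec !lpM hu hv !linear0 addr0.
Qed.

Lemma coprimep_prod_seq p (g : nat -> {poly F}) (r : seq nat) :
  (forall k, k \in r -> coprimep p (g k)) -> coprimep p (\prod_(k <- r) g k).
Proof.
elim: r => [|x r IH] h; first by rewrite big_nil coprimep1.
rewrite big_cons coprimepMr h ?mem_head //= IH // => k kr.
by rewrite h // in_cons kr orbT.
Qed.

Lemma ker_prod f (g : nat -> {poly F}) (r : seq nat) : uniq r ->
  (forall j k, j \in r -> k \in r -> j != k -> coprimep (g j) (g k)) ->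
  lker (lfun_poly (\prod_(j <- r) g j) f) = (\sum_(j <- r) lker (lfun_poly (g j) f))%VS
  /\ \dim (lker (lfun_poly (\prod_(j <- r) g j) f)) = (\sum_(j <- r) \dim (lker (lfun_poly (g j) f)))%N.
Proof.
elim: r => [|x r IH] /=.
  move=> _ _; rewrite !big_nil.
  have -> : lker (lfun_poly 1 f) = 0%VS.
    by apply/vspaceP => x; rewrite memv_ker memv0 lp1.
  by rewrite dimv0.
case/andP => xr ur hc.
have hc' : forall j k, j \in r -> k \in r -> j != k -> coprimep (g j) (g k).
  by move=> j k jr kr; apply: hc; rewrite in_cons ?jr ?kr orbT.
have [IH1 IH2] := IH ur hc'.
have cop : coprimep (g x) (\prod_(k <- r) g k).
  apply: coprimep_prod_seq => k kr; apply: hc; rewrite ?in_cons ?eqxx ?kr ?orbT //.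
  by apply: contraNneq xr => ->.
have [K1 K2] := ker_coprime f cop.
rewrite !big_cons K1 IH1; split => //.
by rewrite dimv_disjoint_sum -?IH1 // IH2.
Qed.

End LP.


Import passmx.
Section CH.
Variables (F : fieldType) (A : vectType F).

Lemma CH_gen d (M : 'M[F]_d) :
  \sum_(i < size (char_poly M)) (char_poly M)`_i *: M ^+ i = 0.
Proof.
case: d M => [|d] M; first by apply/matrixP => -[].
have H := Cayley_Hamilton M; rewrite -{1}[char_poly M]coefK poly_def rmorph_sum /= in H.
rewrite -[RHS]H; apply: eq_bigr => i _.
by rewrite horner_mxZ rmorphXn /= horner_mx_X.
Qed.

Let e := vbasis (fullv : {vspace A}).
Let eb : basis_of fullv e := vbasisP fullv.

Lemma mxof1 : passmx.mxof e e \1%VF = 1.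
Proof.
have -> : (\1%VF : 'End(A)) = passmx.hommx e e 1.
  by apply/lfunP => u; rewrite passmx.hommxE // mulmx1 passmx.rVofK // id_lfunE.
by rewrite passmx.hommxK.
Qed.

Lemma mxof_itf (f : 'End(A)) i : passmx.mxof e e (itf f i) = (passmx.mxof e e f) ^+ i.
Proof.
elim: i => [|i IH]; first by rewrite expr0 /itf /= mxof1.
by rewrite exprSr -IH /itf /= (@passmx.mxof_comp _ _ _ _ e e e eb).
Qed.

Lemma CH_lfun (f : 'End(A)) : lfun_poly (lfun_char_poly f) f = 0.
Proof.
apply/eqP; rewrite -(passmx.mxof_eq0 eb eb) /lfun_poly linear_sum /=.
rewrite /lfun_char_poly -[X in _ == X](CH_gen (passmx.mxof e e f)); apply/eqP.
by apply: eq_bigr => i _; rewrite linearZ /= -mxof_itf.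
Qed.

End CH.


Section Mul.
Variables (F : fieldType) (A : vectType F) (mul : A -> A -> A).
Hypothesis Hb : bilinear_mul mul.

Lemma lb_mulDl x y z : mul (x + y) z = mul x z + mul y z.
Proof. by have := Hb.1 1 x y z; rewrite !scale1r. Qed.
Lemma lb_mulDr x y z : mul z (x + y) = mul z x + mul z y.
Proof. by have := Hb.2 1 x y z; rewrite !scale1r. Qed.
Lemma lb_mul0l z : mul 0 z = 0.
Proof. have h : mul 0 z + mul 0 z = mul 0 z + 0 by rewrite addr0 -lb_mulDl addr0. exact: (addrI _ h). Qed.
Lemma lb_mul0r z : mul z 0 = 0.
Proof. have h : mul z 0 + mul z 0 = mul z 0 + 0 by rewrite addr0 -lb_mulDr addr0. exact: (addrI _ h). Qed.
Lemma lb_mulZl c x z : mul (c *: x) z = c *: mul x z.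
Proof. by have := Hb.1 c x 0 z; rewrite !addr0 lb_mul0l addr0. Qed.
Lemma lb_mulZr c x z : mul z (c *: x) = c *: mul z x.
Proof. by have := Hb.2 c x 0 z; rewrite !addr0 lb_mul0r addr0. Qed.
Lemma lb_mulsum_l m (G : 'I_m -> A) z : mul (\sum_(i < m) G i) z = \sum_(i < m) mul (G i) z.
Proof.
elim: m G => [|m IH] G; first by rewrite !big_ord0 lb_mul0l.
by rewrite !big_ord_recr /= lb_mulDl IH.
Qed.
Lemma lb_mulsum_r m (G : 'I_m -> A) z : mul z (\sum_(i < m) G i) = \sum_(i < m) mul z (G i).
Proof.
elim: m G => [|m IH] G; first by rewrite !big_ord0 lb_mul0r.
by rewrite !big_ord_recr /= lb_mulDr IH.
Qed.

Lemma LE a x : Lmul mul a x = mul a x.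
Proof.
pose la : {linear A -> A} :=
  HB.pack (mul a) (GRing.isLinear.Build F A A *:%R (mul a) (fun c x y => Hb.2 c x y a)).
exact: (lfunE la x).
Qed.

Hypothesis Hl : leibniz mul.

Lemma sq_ann x z : mul (mul x x) z = 0.
Proof.
have h : mul (mul x x) z + mul x (mul x z) = 0 + mul x (mul x z) by rewrite add0r -Hl.
exact: (addIr _ h).
Qed.

Lemma apow_ann a k z : mul (apow mul a k.+1) z = 0.
Proof.
elim: k z => [|k IH] z; first exact: sq_ann.
have := Hl a (apow mul a k.+1) z; rewrite IH lb_mul0r IH addr0 => /esym.
by [].
Qed.

End Mul.


Section Cyc.
Variables (F : fieldType) (A : vectType F) (mul : A -> A -> A).
Hypothesis Hb : bilinear_mul mul.
Hypothesis Hl : leibniz mul.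
Variables (a : A) (n : nat).
Hypothesis Hc : cyclic_basis mul a n.
Local Notation f := (Lmul mul a).
Local Notation B := (mkseq (apow mul a) n).

Lemma itf_apow k : itf f k a = apow mul a k.
Proof.
elim: k => [|k IH]; first by rewrite /itf /= id_lfunE.
by rewrite itfS0 IH LE.
Qed.

Lemma lpXn k x : lfun_poly 'X^k f x = itf f k x.
Proof.
rewrite lpE size_polyXn big_ord_recr /= coefXn eqxx scale1r big1 ?add0r //.
by move=> i _; rewrite coefXn ltn_eqF // scale0r.
Qed.

Lemma span_poly k x : x \in <<mkseq (apow mul a) k>>%VS ->
  exists h : {poly F}, (size h <= k)%N /\ x = lfun_poly h f a.
Proof.
elim: k x => [|k IH] x.
  by rewrite span_nil memv0 => /eqP ->; exists 0; rewrite size_poly0 lp0.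
rewrite mkseqS (eq_span (mem_rcons _ _)) span_cons => /memv_addP [u /vlineP [c ->]].
case=> v /IH [h [hs ->]] ->.
exists (c *: 'X^k + h); split.
  apply: leq_trans (size_polyD _ _) _; rewrite geq_max (leq_trans hs) // andbT.
  by apply: leq_trans (size_scale_leq _ _) _; rewrite size_polyXn.
by rewrite lpD lpZ lpXn itf_apow.
Qed.

Lemma expand x : exists h : {poly F}, (size h <= n)%N /\ x = lfun_poly h f a.
Proof.
apply: span_poly; case/andP: Hc => /eqP -> _; exact: memvf.
Qed.

Lemma dimA : \dim (fullv : {vspace A}) = n.
Proof. by rewrite (size_basis (X := in_tuple B) Hc) size_mkseq. Qed.

Lemma sizep : size (lfun_char_poly f) = n.+1.
Proof. by rewrite /lfun_char_poly size_char_poly dimA. Qed.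

Lemma annih g : lfun_poly g f a = 0 -> lfun_char_poly f %| g.
Proof.
move=> hg; apply/modp_eq0P.
set p := lfun_char_poly f.
have p0 : p != 0 by rewrite -size_poly_eq0 sizep.
have hr : lfun_poly (g %% p) f a = 0.
  move: hg; rewrite {1}(divp_eq g p) lpD lpM CH_lfun.
  by rewrite lfunE /= linear0 add0r.
have sr : (size (g %% p)%R <= n)%N by rewrite -ltnS -sizep ltn_modp.
move: hr; rewrite (@lp_wide _ _ _ _ _ _ sr).
have fr : free (in_tuple B) by exact: basis_free Hc.
move/freeP: fr => fr hsum; apply/polyP => i; rewrite coef0.
have [lt_in|] := ltnP i n; last by move=> h; rewrite nth_default // (leq_trans sr h).
have lt' : (i < size B)%N by rewrite size_mkseq.
apply: (fr (fun j => (g %% p)`_j) _ (Ordinal lt')).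
rewrite -(big_mkord xpredT (fun i => (g %% p)`_i *: itf f i a)) in hsum.
rewrite -(big_mkord xpredT (fun i => (g %% p)`_i *: B`_i)) size_mkseq -[RHS]hsum.
apply: eq_big_nat => j /andP[_ hj].
by rewrite nth_mkseq // itf_apow.
Qed.

Lemma mul_decomp y x : exists c, mul y x = c *: mul a x.
Proof.
have [h [hs ->]] := expand y.
rewrite (@lp_wide _ _ _ _ _ n.+1 (leq_trans hs (leqnSn _))) lb_mulsum_l // big_ord_recl.
exists h`_0; rewrite big1 ?addr0; first by rewrite lb_mulZl // /itf /= id_lfunE.
by move=> i _; rewrite lb_mulZl // itf_apow /= apow_ann // scaler0.
Qed.

Lemma left_annih z y : mul (mul a z) y = 0.
Proof.
have [h [_ ->]] := expand z.
rewrite -(LE Hb a) -lp_comm lpE lb_mulsum_l //; apply: big1 => i _.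
by rewrite lb_mulZl // -itfS itf_apow apow_ann // scaler0.
Qed.

Lemma imker Q : lfun_char_poly f = Q * 'X -> limg f = lker (lfun_poly Q f).
Proof.
move=> pQ; apply/subv_anti/andP; split.
  apply/subvP => x /memv_imgP [z _ ->]; rewrite memv_ker -lpMX -pQ CH_lfun.
  by rewrite lfunE.
apply/subvP => x; have [h [_ ->]] := expand x; rewrite memv_ker -lpM => /eqP /annih.
have Q0 : Q != 0.
  by apply/eqP => Q0; move: (sizep); rewrite pQ Q0 mul0r size_poly0.
rewrite pQ (dvdp_mul2l _ _ Q0) => /divpK <-.
by rewrite lpMX lp_comm memv_img ?memvf.
Qed.

Lemma sqA_eq : sqA mul = limg f.
Proof.
apply/subv_anti/andP; split.
  apply/span_subvP => w /allpairsP [[x y] [_ _ ->]] /=.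
  have [c ->] := mul_decomp x y; apply: memvZ.
  by rewrite -(LE Hb a) memv_img ?memvf.
apply/subvP => w /memv_imgP [z _ ->]; rewrite LE //.
set e := vbasis (fullv : {vspace A}).
have eb : basis_of fullv e := vbasisP fullv.
have ine (i : 'I_(\dim (fullv : {vspace A}))) : e`_i \in (e : seq A).
  by apply: mem_nth; rewrite size_tuple.
rewrite [a](coord_basis eb (memvf a)) lb_mulsum_l //; apply: memv_suml => i _.
rewrite lb_mulZl // [z](coord_basis eb (memvf z)) lb_mulsum_r //; apply: memvZ.
apply: memv_suml => j _; rewrite lb_mulZr //; apply: memvZ.
by apply: memv_span; apply: allpairs_f; apply: ine.
Qed.

End Cyc.


Unset Implicit Arguments.

Theorem mainTheorem10 (F : fieldType) (A : vectType F) (mul : A -> A -> A)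
  (a : A) (n : nat) (s : nat) (P : nat -> {poly F}) (N : nat -> nat) :
  bilinear_mul mul ->
  leibniz mul ->
  cyclic_basis mul a n ->
  (0 < s)%N ->
  (forall j, (j < s)%N -> P j \is monic /\ irreducible_poly (P j)) ->
  (forall j k, (j < s)%N -> (k < s)%N -> P j = P k -> j = k) ->
  P 0%N = 'X ->
  (forall j, (j < s)%N -> (0 < N j)%N) ->
  lfun_char_poly (Lmul mul a) = \prod_(j < s) P j ^+ N j ->
  [/\ (forall x y, x \in sqA mul -> y \in sqA mul -> mul x y = 0),
      sqA mul = (Usp mul a P 0%N (N 0%N).-1 + \sum_(1%N <= j < s) Usp mul a P j (N j))%VS,
      directv (Usp mul a P 0%N (N 0%N).-1 + \sum_(1%N <= j < s) Usp mul a P j (N j))%VS &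
      (forall j i, (j < s)%N -> (1 <= i <= N j)%N -> (j, i) != (0%N, N 0%N) ->
         is_ideal mul (Usp mul a P j i))].
Proof.
move=> Hb Hl Hc s0 Hirr Hinj P0 N0 Hchar.
case: s s0 Hirr Hinj N0 Hchar => [//|s'] _ Hirr Hinj N0 Hchar.
set f := Lmul mul a.
pose e j := if j == 0%N then (N 0%N).-1 else N j.
pose g j := P j ^+ e j.
pose Q := \prod_(j <- iota 0 s'.+1) g j.
have ir1 : index_iota 1 s'.+1 = iota 1 s' by rewrite /index_iota subSS subn0.
have restE : \prod_(j <- iota 1 s') g j = \prod_(j <- iota 1 s') P j ^+ N j.
  apply: eq_big_seq => j; rewrite mem_iota => /andP [hj _].
  by rewrite /g /e; case: j hj.
have pQ : lfun_char_poly f = Q * 'X.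
  rewrite Hchar -(big_mkord xpredT (fun j => P j ^+ N j)) /Q /index_iota subn0 /=.
  rewrite !big_cons restE /g /e /= P0 -mulrA (mulrC _ 'X) mulrA -exprSr.
  by rewrite prednK // N0.
have K := imker Hb Hc pQ.
have cop j k : (j < s'.+1)%N -> (k < s'.+1)%N -> j != k -> coprimep (P j) (P k).
  move=> hj hk jk; rewrite irreducible_poly_coprime; last exact: (Hirr j hj).2.
  apply/negP => dv.
  have [_ irk] := (Hirr k hk).2.
  have hsz : size (P j) != 1%N.
    by have [_ [h1 _]] := (Hirr j hj); rewrite neq_ltn h1 orbT.
  have := irk _ hsz dv; rewrite eqp_monic ?(Hirr j hj).1 ?(Hirr k hk).1 //.
  by move/eqP/(Hinj _ _ hj hk)/eqP; rewrite (negPf jk).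
have mi j : j \in iota 0 s'.+1 -> (j < s'.+1)%N by rewrite mem_iota.
have [KP1 KP2] := @ker_prod _ _ f g _ (iota_uniq 0 s'.+1)
  (fun j k hj hk jk => coprimep_expr _ (coprimep_expl _ (cop j k (mi j hj) (mi k hk) jk))).
have sumE : forall G : nat -> {vspace A}, (\sum_(1 <= j < s'.+1) G j)%VS = (\sum_(j <- iota 1 s') G j)%VS.
  by move=> G; rewrite ir1.
have UE : (Usp mul a P 0%N (N 0%N).-1 + \sum_(1%N <= j < s'.+1) Usp mul a P j (N j))%VS
   = (\sum_(j <- iota 0 s'.+1) lker (lfun_poly (g j) f))%VS.
  rewrite sumE /= big_cons; congr (_ + _)%VS.
  apply: eq_big_seq => j; rewrite mem_iota => /andP [hj _].
  by rewrite /Usp /g /e; case: j hj.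
have sqE : sqA mul = limg f by exact: (sqA_eq Hb Hl Hc).
split.
- move=> x y /[swap] _; rewrite sqE => /memv_imgP [z _ ->].
  by rewrite (LE Hb a) (left_annih Hb Hl Hc).
- by rewrite UE sqE K KP1.
- rewrite directvE /= UE -KP1 KP2 big_cons ir1; apply/eqP; congr (_ + _)%N.
  apply: eq_big_seq => j; rewrite mem_iota => /andP [hj _].
  by rewrite /Usp /g /e; case: j hj.
move=> j i hj /andP [i1 iN] ji.
have sub : (Usp mul a P j i <= limg f)%VS.
  rewrite K /Usp; apply: ker_dvd.
  rewrite /Q (bigD1_seq j) ?iota_uniq ?mem_iota //=; apply: dvdp_mulr.
  rewrite /g dvdp_exp2l // /e; case: eqP => [j0|_] //; subst j.
  have iN0 : i != N 0%N by apply: contraNneq ji => ->.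
  by rewrite -ltnS prednK ?N0 // ltn_neqAle iN0 iN.
move=> x y xU; split.
  have := subvP sub x xU => /memv_imgP [z _ ->].
  by rewrite (LE Hb a) (left_annih Hb Hl Hc) mem0v.
have [c ->] := mul_decomp Hb Hl Hc y x; apply: memvZ; rewrite -(LE Hb a).
by move: xU; rewrite /Usp !memv_ker => /eqP h; rewrite lp_comm h linear0.
Qed.
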